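(* Let $S(0)>0$, $\sigma>0$, $T>0$, $K>0$, and real numbers $r<\mu$. Let $S(T)=S(0)e^{\mu T-\frac12\sigma^2T+\sigma\sqrt T Z}$ with $Z\sim N(0,1)$ under $P$, and $C(T)=(S(T)-K)^+$. For $x\in[0,1)$ let $C_x=e^{-rT}\big(\mathbb{E}_P(C(T))-\tfrac12xS(0)(e^{\mu T}-e^{rT})\big)$ and $$d_1=\frac{1}{\sigma\sqrt T}\Big(\ln\frac{(xS(0)-C_x)e^{rT}}{S(0)x}-\mu T+\tfrac12\sigma^2T\Big),\quad d=\frac{1}{\sigma\sqrt T}\Big(\ln\frac{K}{S(0)}-\mu T+\tfrac12\sigma^2T\Big),$$ $$d_2=\frac{1}{\sigma\sqrt T}\Big(\ln\frac{K+(C_x-xS(0))e^{rT}}{S(0)(1-x)}-\mu T+\tfrac12\sigma^2T\Big),$$ with the convention $d_1=-\infty$ whenever $x=0$ or $xS(0)-C_x\le0$. Then $d_1<d<d_2$.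
   Context: The paper assumes $\mu>r$ throughout; $\mathbb{E}_P$ is expectation under the physical measure $P$. *)

(* Defs.v *)
From HB Require Import structures.
From mathcomp Require Import all_boot all_order all_algebra.
From mathcomp Require Import all_classical all_reals all_analysis.
Set Implicit Arguments. Unset Strict Implicit. Unset Printing Implicit Defensive.
Import Order.TTheory GRing.Theory Num.Theory.
Local Open Scope ring_scope.

Section defs.
Variable R : realType.

Definition stock_T (S0 mu sigma Tm z : R) : R :=
  S0 * expR (mu * Tm - 2^-1 * sigma ^+ 2 * Tm + sigma * Num.sqrt Tm * z).

Definition call_payoff (S0 mu sigma Tm K z : R) : R :=
  Num.max (stock_T S0 mu sigma Tm z - K) 0.

(* C_x = e^{-rT} (E_P[C(T)] - x S(0)(e^{mu T} - e^{r T})/2), EC = E_P[C(T)] *)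
Definition Cx (EC S0 mu r Tm x : R) : R :=
  expR (- r * Tm) * (EC - 2^-1 * x * S0 * (expR (mu * Tm) - expR (r * Tm))).

Definition dfun (sigma mu Tm a : R) : R :=
  (sigma * Num.sqrt Tm)^-1 * (ln a - mu * Tm + 2^-1 * sigma ^+ 2 * Tm).

End defs.

(* Main.v *)
Require Import Defs.
From HB Require Import structures.
From mathcomp Require Import all_boot all_order all_algebra.
From mathcomp Require Import all_classical all_reals all_analysis.
From mathcomp Require Import ring lra measurable_realfun.
Import Order.TTheory GRing.Theory Num.Theory.
Local Open Scope ring_scope.

Lemma dfun_lt {R : realType} (sigma mu Tm a b : R) : 0 < sigma -> 0 < Tm -> 0 < a -> a < b ->
  dfun sigma mu Tm a < dfun sigma mu Tm b.
Proof.
move=> s0 T0 a0 ab; rewrite /dfun ltr_pM2l; last first.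
  by rewrite invr_gt0 mulr_gt0 // sqrtr_gt0.
by rewrite ltrD2r ltrD2r ltr_ln // posrE (lt_trans a0 ab).
Qed.

Lemma bs_alg_part {R : realType} (EC S0 sigma Tm K mu r x : R) :
  0 < S0 -> 0 < sigma -> 0 < Tm -> 0 < K -> r < mu -> 0 <= x < 1 ->
  0 < EC -> S0 * expR (mu * Tm) - K <= EC ->
  let C := Cx EC S0 mu r Tm x in
  let d := dfun sigma mu Tm (K / S0) in
  let a2 := (K + (C - x * S0) * expR (r * Tm)) / (S0 * (1 - x)) in
  let d2 := dfun sigma mu Tm a2 in
  (0 < x -> 0 < x * S0 - C ->
     dfun sigma mu Tm ((x * S0 - C) * expR (r * Tm) / (S0 * x)) < d)
  /\ 0 < a2 /\ d < d2.
Proof.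
move=> S00 s0 T0 K0 rmu /andP[x0 x1] E0 EA C d a2 d2.
set u := S0 * expR (mu * Tm); set v := S0 * expR (r * Tm).
have vu : v < u by rewrite ltr_pM2l // ltr_expR ltr_pM2r.
have v0 : 0 < v by rewrite mulr_gt0 // expR_gt0.
have er0 : 0 < expR (r * Tm) := expR_gt0 _.
have key : (C - x * S0) * expR (r * Tm) = EC - x * (u + v) / 2.
  rewrite /C /Cx /u /v mulrBl -mulrA (mulrC _ (expR (r * Tm))) mulrA.
  rewrite mulNr expRN; field; exact: lt0r_neq0.
have xw : x * ((u + v) / 2 - K) < EC.
  have h0 : (u + v) / 2 - K < EC.
    have EA' : u - K <= EC := EA. lra.
  nra.
have S0x : 0 < S0 * (1 - x) by rewrite mulr_gt0 // subr_gt0.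
have a2gt : K / S0 < a2.
  rewrite -subr_gt0.
  have -> : a2 - K / S0 = (EC - x * ((u + v) / 2 - K)) / (S0 * (1 - x)).
    rewrite /a2 key; field.
    by rewrite subr_eq0 gt_eqF ?x1 // gt_eqF.
  by rewrite divr_gt0 // subr_gt0.
split; last first.
  split; first by apply: lt_trans a2gt; rewrite divr_gt0.
  by apply: dfun_lt => //; rewrite divr_gt0.
move=> xp h; apply: dfun_lt => //.
  by rewrite divr_gt0 // ?mulr_gt0.
rewrite -subr_gt0.
have -> : K / S0 - (x * S0 - C) * expR (r * Tm) / (S0 * x)
   = (EC - x * ((u + v) / 2 - K)) / (S0 * x).
  have key' : (x * S0 - C) * expR (r * Tm) = x * (u + v) / 2 - EC.
    by rewrite -opprB mulNr key opprB.
  rewrite key'; field.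
  by rewrite gt_eqF ?S00 //= gt_eqF ?xp.
by rewrite divr_gt0 ?mulr_gt0 // subr_gt0.
Qed.

Lemma normal01_integral {R : realType} (f : R -> \bar R) : measurable_fun [set: R] f ->
  (forall x, (0 <= f x)%E) ->
  (\int[normal_prob 0 1]_x f x =
   \int[(@lebesgue_measure R)]_x (f x * (normal_pdf 0 1 x)%:E))%E.
Proof.
move=> mf f0.
have numu := @normal_prob_dominates R 0 1.
rewrite -(Radon_Nikodym_SigmaFinite.change_of_variables numu) //.
have mRN : measurable_fun setT (Radon_Nikodym_SigmaFinite.f (normal_prob 0 1) (@lebesgue_measure R)).
  exact: measurable_int (Radon_Nikodym_SigmaFinite.f_integrable numu).
have mpdf : measurable_fun setT (fun x => (normal_pdf (0:R) 1 x)%:E).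
  by apply/measurable_EFinP; exact: measurable_normal_pdf.
apply: ae_eq_integral => //.
- exact: emeasurable_funM.
- exact: emeasurable_funM.
- apply: ae_eqe_mul2l.
  apply: integral_ae_eq => //.
  + exact: Radon_Nikodym_SigmaFinite.f_integrable.
  + move=> E _ mE.
    by rewrite -Radon_Nikodym_SigmaFinite.f_integral.
Qed.

Lemma normal01_pt {R : realType} (c x : R) :
  expR (c * x) * normal_pdf 0 1 x = expR (c ^+ 2 / 2) * normal_pdf c 1 x.
Proof.
rewrite /normal_pdf oner_eq0 /normal_fun.
rewrite [LHS]mulrCA [RHS]mulrCA -!expRD; congr (_ * expR _).
by rewrite expr1n subr0; field.
Qed.

Lemma normal01_mgf {R : realType} (c : R) :
  (\int[(@lebesgue_measure R)]_x ((expR (c * x) * normal_pdf 0 1 x)%:E) = (expR (c ^+ 2 / 2))%:E)%E.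
Proof.
under eq_integral do rewrite normal01_pt EFinM.
rewrite ge0_integralZl //.
- by rewrite integral_normal_pdf mule1.
- by apply/measurable_EFinP; exact: measurable_normal_pdf.
- by move=> x _; rewrite lee_fin normal_pdf_ge0.
Qed.

Lemma measurable_stock {R : realType} (S0 mu sigma Tm : R) :
  measurable_fun [set: R] (fun z => stock_T S0 mu sigma Tm z).
Proof.
rewrite /stock_T; apply: measurable_funM => //; apply: measurableT_comp => //.
by apply: measurable_funD => //; apply: measurable_funM.
Qed.

Lemma measurable_pay {R : realType} (S0 mu sigma Tm K : R) :
  measurable_fun [set: R] (fun z => call_payoff S0 mu sigma Tm K z).
Proof.
rewrite /call_payoff; apply: measurable_maxr => //.
by apply: measurable_funB => //; exact: measurable_stock.
Qed.

Lemma stock_int {R : realType} (S0 mu sigma Tm : R) : 0 < S0 -> 0 < Tm ->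
  (\int[(@lebesgue_measure R)]_z ((stock_T S0 mu sigma Tm z * normal_pdf 0 1 z)%:E)
   = (S0 * expR (mu * Tm))%:E)%E.
Proof.
move=> S00 T0.
under eq_integral do rewrite /stock_T expRD (mulrA S0) -mulrA EFinM.
rewrite ge0_integralZl //=.
- rewrite normal01_mgf -EFinM -(mulrA S0) -expRD; congr (EFin (_ * expR _)).
  by rewrite exprMn sqr_sqrtr ?ltW //; field.
- apply: measurableT_comp => //; apply: measurable_funM => //.
    apply: measurableT_comp => //; exact: measurable_funM.
  exact: measurable_normal_pdf.
- by move=> x _; rewrite lee_fin mulr_ge0 ?expR_ge0 ?normal_pdf_ge0.
- by rewrite lee_fin mulr_ge0 ?expR_ge0 ?ltW.
Qed.

Lemma prob_part {R : realType} (dsp : measure_display)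
  (Omega : measurableType dsp) (P : probability Omega R)
  (Z : {RV P >-> R})
  (hZ : (distribution P Z : set R -> \bar R) = normal_prob 0 1)
  (S0 sigma Tm K mu : R) :
  0 < S0 -> 0 < sigma -> 0 < Tm -> 0 < K ->
  let EC := fine ('E_P[fun w => call_payoff S0 mu sigma Tm K (Z w)]) in
  0 < EC /\ S0 * expR (mu * Tm) - K <= EC.
Proof.
move=> S00 s0 T0 K0 EC.
pose pay := fun z => call_payoff S0 mu sigma Tm K z.
pose st := fun z => stock_T S0 mu sigma Tm z.
have pay0 z : 0 <= pay z by rewrite /pay /call_payoff le_max lexx orbT.
have payge z : st z - K <= pay z by rewrite /pay /call_payoff le_max lexx.
have st0 z : 0 <= st z by rewrite /st /stock_T mulr_ge0 ?expR_ge0 ?ltW.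
have payle z : pay z <= st z.
  rewrite /pay /call_payoff ge_max st0 andbT; have := st0 z; rewrite /st; lra.
have mpay := measurable_pay S0 mu sigma Tm K.
have mst := measurable_stock S0 mu sigma Tm.
have mpdf := @measurable_normal_pdf R 0 1.
have EE : ('E_P[fun w => call_payoff S0 mu sigma Tm K (Z w)] =
    \int[(@lebesgue_measure R)]_z ((pay z * normal_pdf 0 1 z)%:E))%E.
  rewrite unlock.
  transitivity (\int[distribution P Z]_y (pay y)%:E)%E.
    by rewrite ge0_integral_distribution //=; exact: measurableT_comp.
  pose idTR : measurableTypeR R -> R := idfun.
  have midTR : measurable_fun setT idTR := @measurable_id _ _ setT.
  transitivity (\int[pushforward (normal_prob 0 1) idTR]_y (pay y)%:E)%E.
    apply: eq_measure_integral => A mA _.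
    exact: (congr1 (fun f => f A) hZ).
  rewrite ge0_integral_pushforward //; last first.
    by move=> y _; rewrite lee_fin.
    exact: measurableT_comp.
  rewrite preimage_setT.
  transitivity (\int[(@lebesgue_measure R)]_z ((pay z)%:E * (normal_pdf 0 1 z)%:E))%E.
    apply: normal01_integral; last by move=> y; rewrite lee_fin.
    by apply/measurable_EFinP.
  by apply: eq_integral => z _; rewrite EFinM.
have mpp : measurable_fun [set: R] (fun z => (pay z * normal_pdf 0 1 z)%:E).
  by apply/measurable_EFinP; apply: measurable_funM.
have msp : measurable_fun [set: R] (fun z => (st z * normal_pdf 0 1 z)%:E).
  by apply/measurable_EFinP; apply: measurable_funM.
have mkp : measurable_fun [set: R] (fun z => (K * normal_pdf 0 1 z)%:E).
  by apply/measurable_EFinP; apply: measurable_funM.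
have hup : (\int[(@lebesgue_measure R)]_z ((pay z * normal_pdf 0 1 z)%:E)
             <= (S0 * expR (mu * Tm))%:E)%E.
  rewrite -(@stock_int R S0 mu sigma Tm S00 T0).
  apply: ge0_le_integral => //.
  - by move=> z _; rewrite lee_fin mulr_ge0 ?normal_pdf_ge0.
  - by move=> z _; rewrite lee_fin ler_wpM2r ?normal_pdf_ge0.
have hlow : ((S0 * expR (mu * Tm))%:E <=
    \int[(@lebesgue_measure R)]_z ((pay z * normal_pdf 0 1 z)%:E) + K%:E)%E.
  rewrite -(@stock_int R S0 mu sigma Tm S00 T0).
  have -> : K%:E = (\int[(@lebesgue_measure R)]_z ((K * normal_pdf 0 1 z)%:E))%E.
    under eq_integral do rewrite EFinM.
    rewrite ge0_integralZl //=.
    - by rewrite integral_normal_pdf mule1.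
    - by apply/measurable_EFinP.
    - by move=> z _; rewrite lee_fin normal_pdf_ge0.
    - by rewrite lee_fin ltW.
  rewrite -ge0_integralD //.
  - apply: ge0_le_integral => //.
    + by move=> z _; rewrite lee_fin mulr_ge0 ?normal_pdf_ge0.
    + apply: emeasurable_funD => //.
    + move=> z _; rewrite -EFinD lee_fin -mulrDl ler_wpM2r ?normal_pdf_ge0 //.
      have := payge z; rewrite /st /pay /=; lra.
  - by move=> z _; rewrite lee_fin mulr_ge0 ?normal_pdf_ge0.
  - by move=> z _; rewrite lee_fin mulr_ge0 ?normal_pdf_ge0 ?ltW.
pose c := sigma * Num.sqrt Tm.
pose m := mu * Tm - 2^-1 * sigma ^+ 2 * Tm.
have c0 : 0 < c by rewrite mulr_gt0 // sqrtr_gt0.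
pose L := ln ((K + 1) / S0).
pose a := Num.max 0 ((L - m) / c).
have a0 : 0 <= a by rewrite le_max lexx.
have aL : (L - m) / c <= a by rewrite le_max lexx orbT.
pose delta := normal_pdf 0 1 (a + 1).
have delta0 : 0 < delta.
  by rewrite /delta /normal_pdf oner_eq0 mulr_gt0 ?expR_gt0 // normal_peak_gt0 ?oner_eq0.
have pdfge z : a <= z -> z <= a + 1 -> delta <= normal_pdf 0 1 z.
  move=> az za; rewrite /delta /normal_pdf oner_eq0 /normal_fun.
  rewrite ler_wpM2l ?normal_peak_ge0 // ler_expR !subr0 expr1n !mulNr lerN2.
  rewrite ler_wpM2r ?invr_ge0 //.
  have z0 : 0 <= z by apply: le_trans az.
  nra.
have payge1 z : a <= z -> 1 <= pay z.
  move=> az.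
  have h1 : L <= m + c * z.
    have : (L - m) / c <= z by apply: le_trans az.
    rewrite ler_pdivrMr //; lra.
  have h2 : K + 1 <= st z.
    rewrite /st /stock_T -/m -/c.
    have -> : K + 1 = S0 * expR L.
      rewrite /L lnK; first by rewrite mulrC divfK // gt_eqF.
      by rewrite posrE divr_gt0 // addr_gt0.
    by rewrite ler_pM2l // ler_expR.
  have := payge z; lra.
have hpos : (delta%:E <= \int[(@lebesgue_measure R)]_z ((pay z * normal_pdf 0 1 z)%:E))%E.
  apply: (@le_trans _ _ (\int[(@lebesgue_measure R)]_(z in `[a, (a + 1)%R]%classic) ((pay z * normal_pdf 0 1 z)%:E))%E); last first.
    apply: ge0_subset_integral => //.
    by move=> z _; rewrite lee_fin mulr_ge0 ?normal_pdf_ge0.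
  apply: (@le_trans _ _ (\int[(@lebesgue_measure R)]_(z in `[a, (a + 1)%R]%classic) (cst delta%:E z))%E); last first.
    apply: ge0_le_integral => //.
    - by move=> z _; rewrite lee_fin ltW.
    - exact: measurable_funTS.
    - move=> z; rewrite /= in_itv /= => /andP[az za].
      rewrite lee_fin -[delta]mul1r; apply: ler_pM => //; [exact: ltW|exact: payge1|exact: pdfge].
  have h : (@lebesgue_measure R) `[a, (a + 1)%R]%classic = 1%E.
    rewrite lebesgue_measure_itv /= lte_fin ltrDl ltr01 -EFinD.
    by congr EFin; rewrite addrAC subrr add0r.
  rewrite integral_cst //.
  rewrite le_eqVlt; apply/orP; left; apply/eqP; rewrite -[LHS]mule1; congr (_ * _)%E; symmetry; exact: h.
rewrite /EC EE; move: hup hlow hpos.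
case: (\int[(@lebesgue_measure R)]_z ((pay z * normal_pdf 0 1 z)%:E))%E => [r| |] //=.
- rewrite !lee_fin => _ hl hp; split; first by apply: lt_le_trans hp.
  lra.
Qed.


Theorem mainTheorem3 (R : realType) (dsp : measure_display)
  (Omega : measurableType dsp) (P : probability Omega R)
  (Z : {RV P >-> R})
  (hZ : (distribution P Z : set R -> \bar R) = normal_prob 0 1)
  (S0 sigma Tm K mu r x : R) :
  0 < S0 -> 0 < sigma -> 0 < Tm -> 0 < K -> r < mu -> 0 <= x < 1 ->
  let EC := fine ('E_P[fun w => call_payoff S0 mu sigma Tm K (Z w)]) in
  let C := Cx EC S0 mu r Tm x in
  let d := dfun sigma mu Tm (K / S0) in
  let a2 := (K + (C - x * S0) * expR (r * Tm)) / (S0 * (1 - x)) in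
  let d2 := dfun sigma mu Tm a2 in
  (* d1 = -oo unless x > 0 and x S(0) - C_x > 0; in that case d1 is finite: *)
  (0 < x -> 0 < x * S0 - C ->
     dfun sigma mu Tm ((x * S0 - C) * expR (r * Tm) / (S0 * x)) < d)
  /\ 0 < a2 /\ d < d2.
Proof.
move=> S00 s0 T0 K0 rmu x01 EC C d a2 d2.
have [E0 EA] := @prob_part R dsp Omega P Z hZ S0 sigma Tm K mu S00 s0 T0 K0.
exact: (@bs_alg_part R EC S0 sigma Tm K mu r x S00 s0 T0 K0 rmu x01 E0 EA).
Qed.
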